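(* Let $\mathcal{X}\subset\mathbb{R}$ be finite or countable, $\Theta\subset\mathbb{R}^m$, and for each $\theta\in\Theta$ let $P^\theta=(p^\theta_{ij})_{i,j\in\mathcal{X}}$ be the transition matrix of a time-homogeneous Markov chain $(X_n)$ on $\mathcal{X}$ which is ergodic under $\mathbb{P}^\theta$. Let $\hat F^\theta(x,x')$, $x,x'\in\mathbb{R}$, denote the distribution function of $(X_0,X_1)$ when $X_0$ has the (unique) invariant distribution $\pi^\theta$ of the chain, i.e. $\hat F^\theta(x,x')=\sum_{i\le x}\sum_{j\le x'}\pi^\theta(i)p^\theta_{ij}$. If all transition probabilities $p^\theta_{ij}$, $i,j\in\mathcal{X}$, are Borel measurable in $\theta$, then for each pair $(x,x')\in\mathbb{R}^2$ the function $\theta\mapsto\hat F^\theta(x,x')$ is Borel measurable.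
   Context: A time-homogeneous Markov chain $(X_n)$ is called ergodic if there exists a probability measure $\mu$, not depending on the initial distribution $\mu_0$, such that for every initial distribution $\mu_0$, $\lim_{t\to\infty}\|\mathbb{P}_{\mu_0}(X_t\in\cdot)-\mu\|_{TV}=0$, where $\|\mu-\nu\|_{TV}=2\sup_A(\mu(A)-\nu(A))$; $\mu$ is then the unique invariant distribution. *)

(* Defs.v *)
From HB Require Import structures.
From mathcomp Require Import all_boot all_order all_algebra.
From mathcomp Require Import all_classical all_reals all_analysis.
Set Implicit Arguments. Unset Strict Implicit. Unset Printing Implicit Defensive.
Import Order.TTheory GRing.Theory Num.Theory.
Local Open Scope classical_set_scope.
Local Open Scope ring_scope.

Section Defs.
Variable R : realType.
Variable X : set R.

Definition is_distr (mu : R -> R) : Prop :=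
  (forall i, X i -> 0 <= mu i) /\ (\esum_(i in X) (mu i)%:E = 1)%E.

Definition stochastic (P : R -> R -> R) : Prop :=
  forall i, X i -> is_distr (P i).

Definition mc_step (P : R -> R -> R) (mu : R -> R) : R -> R :=
  fun j => fine (\esum_(i in X) (mu i * P i j)%:E).

Definition mc_law (P : R -> R -> R) (mu0 : R -> R) (t : nat) : R -> R :=
  iter t (mc_step P) mu0.

Definition mc_mass (mu : R -> R) (A : set R) : \bar R :=
  \esum_(i in X `&` A) (mu i)%:E.

Definition tv_norm (mu nu : R -> R) : \bar R :=
  (2%:E * ereal_sup [set (mc_mass mu A - mc_mass nu A)%E | A in [set: set R]])%E.

Definition ergodic (P : R -> R -> R) : Prop :=
  exists mu, is_distr mu /\
    forall mu0, is_distr mu0 ->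
      (fun t => tv_norm (mc_law P mu0 t) mu) @ \oo --> 0%E.

Definition is_invariant (P : R -> R -> R) (pi : R -> R) : Prop :=
  is_distr pi /\ forall j, X j -> mc_step P pi j = pi j.

Definition Fhat (P : R -> R -> R) (pi : R -> R) (x x' : R) : R :=
  fine (\esum_(i in [set i | X i /\ i <= x])
          \esum_(j in [set j | X j /\ j <= x']) (pi i * P i j)%:E).
End Defs.

(* Borel measurability of f restricted to Theta (trace sigma-algebra) *)
Definition measurable_on (d : measure_display) (T : measurableType d)
    (R : realType) (Theta : set T) (f : T -> R) : Prop :=
  forall Y : set R, measurable Y ->
    exists B : set T, measurable B /\ Theta `&` f @^-1` Y = Theta `&` B.

(* Main.v *)
Require Import Defs.
From HB Require Import structures.
From mathcomp Require Import all_boot all_order all_algebra.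
From mathcomp Require Import all_classical all_reals all_analysis.
From mathcomp Require Import measurable_realfun.
From mathcomp Require Import ring lra.
Set Implicit Arguments. Unset Strict Implicit. Unset Printing Implicit Defensive.
Import Order.TTheory GRing.Theory Num.Theory.
Import numFieldTopology.Exports numFieldNormedType.Exports.
Local Open Scope classical_set_scope.
Local Open Scope ring_scope.
Section esum_meas.
Context d (T : measurableType d) (R : realType).

Lemma fsum_measurable (D : set T) (S : set R) (a : T -> R -> \bar R) (s : seq R) :
  (forall i, S i -> measurable_fun D (a ^~ i)) -> (forall i, i \in s -> S i) ->
  measurable_fun D (fun t => (\sum_(i <- s) a t i)%E).
Proof.
move=> ma; elim: s => [|x s IH] hs.
  by under eq_fun do rewrite big_nil; exact: measurable_cst.
under eq_fun do rewrite big_cons.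
apply: emeasurable_funD; first by apply: ma; apply: hs; rewrite inE eqxx.
by apply: IH => i si; apply: hs; rewrite inE si orbT.
Qed.

Lemma esum_measurable (D : set T) (S : set R) (a : T -> R -> \bar R) :
  countable S -> (forall i, S i -> measurable_fun D (a ^~ i)) ->
  measurable_fun D (fun t => \esum_(i in S) a t i).
Proof.
move=> cS ma.
have cF : countable (fsets S).
  have -> : fsets S = [set A | A `<=` S /\ finite_set A].
    by apply/seteqP; split=> A [? ?].
  exact: countable_finite_subset.
have [g gs] := pcard_surjP cF.
pose h n := if pselect (fsets S (g n)) is left _ then g n else set0.
have hF n : fsets S (h n).
  by rewrite /h; case: pselect => // _; exact: fsets_set0.
have hsurj A : fsets S A -> exists n, h n = A.
  move=> FA; have [n _ gn] := gs A FA; exists n.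
  by rewrite /h; case: pselect => //; rewrite gn.
have -> : (fun t => \esum_(i in S) a t i) =
    (fun t => esups (fun n => (\sum_(i \in h n) a t i)%E) 0%N).
  apply/funext => t; rewrite /esum /esups /=; congr ereal_sup.
  apply/seteqP; split.
    move=> _ [A FA <-]; have [n hn] := hsurj A FA; exists n => //.
    by rewrite hn.
  by move=> _ [n _ <-]; exists (h n).
apply: measurable_fun_esups => n.
have [fin sub] := hF n.
under eq_fun do rewrite fsbig_finite//.
apply: (@fsum_measurable _ S) => // i.
by rewrite in_fset_set// inE => /sub.
Qed.
End esum_meas.
Section trace.
Context d (T : measurableType d) (Theta : set T).

Definition trG : set (set T) :=
  [set A | exists B, measurable B /\ Theta `&` A = Theta `&` B].

Lemma trG_sigma : sigma_algebra setT trG.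
Proof.
split.
- by exists set0; split.
- move=> A [B [mB e]]; exists (~` B); split; first exact: measurableC.
  rewrite !setTD.
  apply/seteqP; split=> x [tx nx]; split=> // h.
    by apply: nx; have : (Theta `&` B) x by []; rewrite -e => -[].
  by apply: nx; have : (Theta `&` A) x by []; rewrite e => -[].
- move=> F hF.
  have /choice[B hB] := hF.
  exists (\bigcup_n B n); split; first by apply: bigcupT_measurable => n; case: (hB n).
  rewrite !setI_bigcupr; apply: eq_bigcupr => n _; by case: (hB n).
Qed.

Definition TT := g_sigma_algebraType trG.

Lemma TT_measurableE : (@measurable _ TT) = trG.
Proof. exact: (measurable_g_measurableTypeE trG_sigma). Qed.

Lemma Theta_TT : @measurable _ TT Theta.
Proof. by rewrite TT_measurableE; exists setT; split => //; rewrite setIid setIT. Qed.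

Lemma mon_TT (R : realType) (f : T -> R) :
  measurable_on Theta f <-> measurable_fun (Theta : set TT) (f : TT -> R).
Proof.
split.
- move=> h _ Y mY; rewrite TT_measurableE.
  have [B [mB e]] := h Y mY; exists B; split => //.
  by rewrite setIA setIid.
- move=> h Y mY; have := h Theta_TT Y mY; rewrite TT_measurableE => -[B [mB e]].
  by exists B; split => //; rewrite -e setIA setIid.
Qed.
End trace.
Section chain.
Context (R : realType) (X : set R).
Local Open Scope ereal_scope.

Lemma esumZ (S : set R) (c : R) (f : R -> R) : (0 <= c)%R ->
  \esum_(i in S) (c * f i)%:E = c%:E * \esum_(i in S) (f i)%:E.
Proof.
move=> c0; rewrite /esum -ereal_supZl//; last first.
  by apply/set0P; exists 0; exists set0; [exact: fsets_set0|rewrite fsbig_set0].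
congr ereal_sup; apply/seteqP; split.
- move=> _ [A [finA sA] <-]; exists (\sum_(x \in A) (f x)%:E); first by exists A.
  by rewrite !fsumEFin// -EFinM mulr_fsumr.
- move=> _ [_ [A [finA sA] <-] <-]; exists A => //.
  by rewrite !fsumEFin// -EFinM mulr_fsumr.
Qed.

Lemma esum_swap (S : set R) (a : R -> R -> \bar R) :
  (forall i j, S i -> S j -> 0 <= a i j) ->
  \esum_(i in S) \esum_(j in S) a i j = \esum_(j in S) \esum_(i in S) a i j.
Proof.
move=> a0; rewrite esum_esum// (esum_esum (a := fun j i => a i j)); last first.
  by move=> i j Si Sj; exact: a0.
rewrite (reindex_esum (S `*`` (fun=> S)) _ (fun x => (x.2, x.1)))//; split=> //=.
- by move=> [i j] [/=].
- by move=> [i1 i2] [j1 j2] /= _ _ [] -> ->.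
- by move=> [i1 i2] [Pi1 Qi2] /=; exists (i2, i1).
Qed.

Lemma esum_ge1 (S : set R) (f : R -> \bar R) j : S j -> f j <= \esum_(i in S) f i.
Proof.
move=> Sj; apply: esum_ge; exists [set j]; last by rewrite fsbig_set1.
by split; [exact: finite_set1| by move=> _ ->].
Qed.

Definition delta (i0 : R) : R -> R := fun i => if i == i0 then 1%R else 0%R.

Lemma delta_distr i0 : X i0 -> is_distr X (delta i0).
Proof.
move=> Xi0; split; first by move=> i _; rewrite /delta; case: ifP.
rewrite (esumID [set i0]); last by move=> i _; rewrite lee_fin /delta; case: ifP.
rewrite (@esum1 _ _ (X `&` ~` [set i0])) ?adde0; last by move=> i [_ /= ni]; rewrite /delta ifN//; apply/eqP.
rewrite (_ : X `&` [set i0] = [set i0]); last by apply/seteqP; split=> [i []//|i ->].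
by rewrite esum_set1 /delta ?eqxx.
Qed.

Definition tvset (mu nu : R -> R) :=
  [set (mc_mass X mu A - mc_mass X nu A) | A in [set: set R]].

Lemma mass1 mu j : X j -> (0 <= mu j)%R -> mc_mass X mu [set j] = (mu j)%:E.
Proof.
move=> Xj m0; rewrite /mc_mass (_ : X `&` [set j] = [set j]) ?esum_set1//.
by apply/seteqP; split=> [i []//|i ->].
Qed.

Lemma massC mu j : is_distr X mu -> X j -> mc_mass X mu (~` [set j]) = 1 - (mu j)%:E.
Proof.
move=> [m0 m1] Xj.
have := esumID [set j] X (fun i => (mu i)%:E) (fun i Xi => m0 i Xi).
rewrite m1 -/(mc_mass X mu [set j]) -/(mc_mass X mu (~` [set j])) mass1 ?m0//.
case: (mc_mass X mu (~` [set j])) => [r||] /= e.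
- move: e; rewrite -EFinD => /eqP; rewrite eqe => /eqP h.
  by rewrite -EFinD; congr EFin; lra.
- by move: e.
- by move: e.
Qed.

Lemma mass0 mu : mc_mass X mu set0 = 0.
Proof. by rewrite /mc_mass setI0 esum_set0. Qed.

Lemma tvset_ge0 mu nu : 0 <= ereal_sup (tvset mu nu).
Proof. by apply: ereal_sup_ubound; exists set0 => //; rewrite !mass0 sube0. Qed.

Lemma pt_bound a b j : is_distr X a -> is_distr X b -> X j ->
  (`|a j - b j|)%:E <= ereal_sup (tvset a b).
Proof.
move=> da db Xj; have [a0 _] := da; have [b0 _] := db.
have [ab|ab] := leP (b j) (a j).
- rewrite ger0_norm ?subr_ge0//; apply: ereal_sup_ubound; exists [set j] => //.
  by rewrite !mass1// ?a0 ?b0// EFinB.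
- rewrite ltr0_norm ?subr_lt0// opprB; apply: ereal_sup_ubound.
  exists (~` [set j]) => //.
  rewrite !massC// -!EFinB; congr EFin; ring.
Qed.

Lemma tv_pt a b j : is_distr X a -> is_distr X b -> X j ->
  (`|a j - b j|)%:E <= tv_norm X a b.
Proof.
move=> da db Xj; apply: (le_trans (pt_bound da db Xj)).
by apply: lee_pemull; [exact: tvset_ge0 | rewrite lee_fin ler1n].
Qed.

Lemma mass_eqX mu mu' A : (forall i, X i -> mu i = mu' i) ->
  mc_mass X mu A = mc_mass X mu' A.
Proof. by move=> h; apply: eq_esum => i [Xi _]; rewrite h. Qed.

Variable P : R -> R -> R.

Lemma step_eqX mu mu' j : (forall i, X i -> mu i = mu' i) ->
  mc_step X P mu j = mc_step X P mu' j.
Proof.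
by move=> h; rewrite /mc_step (eq_esum (b := fun i => (mu' i * P i j)%:E))// => i Xi; rewrite h.
Qed.

Lemma law_inv pi : (forall j, X j -> mc_step X P pi j = pi j) ->
  forall t j, X j -> mc_law X P pi t j = pi j.
Proof.
move=> h; elim=> [//|t IH] j Xj; rewrite /mc_law /=.
by rewrite (step_eqX j IH); exact: h.
Qed.

Hypothesis sP : stochastic X P.

Lemma P_ge0 i j : X i -> X j -> (0 <= P i j)%R.
Proof. by move=> Xi Xj; case: (sP Xi) => h _; exact: h. Qed.

Lemma P_sum i : X i -> \esum_(j in X) (P i j)%:E = 1.
Proof. by move=> Xi; case: (sP Xi). Qed.

Lemma P_le1 i j : X i -> X j -> (P i j <= 1)%R.
Proof.
move=> Xi Xj; rewrite -lee_fin -(P_sum Xi).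
exact: (esum_ge1 (fun j => (P i j)%:E) Xj).
Qed.

Lemma step_fin mu j : is_distr X mu -> X j ->
  (mc_step X P mu j)%:E = \esum_(i in X) (mu i * P i j)%:E /\ (0 <= mc_step X P mu j)%R.
Proof.
move=> [mu0 mu1] Xj.
have h0 : 0 <= \esum_(i in X) (mu i * P i j)%:E.
  by apply: esum_ge0 => i Xi; rewrite lee_fin mulr_ge0// ?mu0// P_ge0.
have h1 : \esum_(i in X) (mu i * P i j)%:E <= 1.
  rewrite -mu1; apply: le_esum => i Xi; rewrite lee_fin.
  by rewrite -[leRHS]mulr1 ler_wpM2l ?mu0// P_le1.
have hf : \esum_(i in X) (mu i * P i j)%:E \is a fin_num.
  by rewrite ge0_fin_numE// (le_lt_trans h1)// ltry.
by rewrite /mc_step fineK//; split=> //; rewrite fine_ge0.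
Qed.

Lemma step_distr mu : is_distr X mu -> is_distr X (mc_step X P mu).
Proof.
move=> dmu; have [m0 m1] := dmu.
split; first by move=> j Xj; case: (step_fin dmu Xj).
rewrite (eq_esum (b := fun j => \esum_(i in X) (mu i * P i j)%:E)); last first.
  by move=> j Xj; case: (step_fin dmu Xj).
rewrite -(esum_swap (a := fun i j => (mu i * P i j)%:E)); last first.
  by move=> i j Xi Xj; rewrite lee_fin mulr_ge0// ?P_ge0// m0.
rewrite (eq_esum (b := fun i => (mu i)%:E))// => i Xi.
by rewrite esumZ ?m0// P_sum// mule1.
Qed.

Lemma law_distr mu0 t : is_distr X mu0 -> is_distr X (mc_law X P mu0 t).
Proof. by move=> d0; elim: t => [//|t IH]; rewrite /mc_law /=; exact: step_distr. Qed.

Lemma ergodic_pt pi i0 : ergodic X P -> is_invariant X P pi -> X i0 ->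
  forall j, X j -> (fun t => mc_law X P (delta i0) t j) @ \oo --> pi j.
Proof.
move=> [mu [dmu cvg]] [dpi ipi] Xi0 j Xj.
have e t : tv_norm X (mc_law X P pi t) mu = tv_norm X pi mu.
  have h : mc_mass X (mc_law X P pi t) = mc_mass X pi.
    by apply/funext => A; apply: mass_eqX => i Xi; exact: law_inv.
  by rewrite /tv_norm h.
have tv0 : tv_norm X pi mu = 0.
  have := cvg pi dpi; rewrite (funext e) => /cvg_lim <-//.
  by rewrite lim_cst.
have pimu : pi j = mu j.
  have := tv_pt dpi dmu Xj; rewrite tv0 lee_fin normr_le0 subr_eq0 => /eqP//.
rewrite pimu.
have := cvg (delta i0) (delta_distr Xi0).
move/fine_cvgP => [finv ct].
apply/cvgrPdist_lt => eps eps0.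
move/cvgrPdist_lt: ct => /(_ eps eps0) ct.
apply: filterS2 finv ct => t ft ht.
rewrite /= sub0r normrN in ht.
rewrite distrC (le_lt_trans _ ht)//.
have := tv_pt (law_distr t (delta_distr Xi0)) dmu Xj.
rewrite -(fineK ft) lee_fin => h; exact: (le_trans h (ler_norm _)).
Qed.
End chain.

Theorem lemma6 (R : realType) (m : nat) (X : set R) (Theta : set (m.-tuple R))
    (p : m.-tuple R -> R -> R -> R) (piv : m.-tuple R -> R -> R) :
  countable X ->
  (forall th, Theta th -> stochastic X (p th)) ->
  (forall th, Theta th -> ergodic X (p th)) ->
  (forall th, Theta th -> is_invariant X (p th) (piv th)) ->
  (forall i j, X i -> X j -> measurable_on Theta (fun th => p th i j)) ->
  forall x x' : R, measurable_on Theta (fun th => Fhat X (p th) (piv th) x x').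
Proof.
move=> cX sP eP iP mp x x'.
have [[i0 Xi0]|nX] := pselect (exists i, X i); last first.
  have Th0 : Theta = set0.
    rewrite predeqE => th; split=> // Tth; have [mu [[_ m1] _]] := eP th Tth.
    move: m1; rewrite (_ : X = set0) ?esum_set0.
      by move=> /(congr1 fine) /= /eqP; rewrite eq_sym oner_eq0.
    by rewrite predeqE => i; split=> // Xi; apply: nX; exists i.
  by move=> Y mY; exists set0; split => //; rewrite Th0 !set0I.
apply/mon_TT.
have mpT i j : X i -> X j ->
    measurable_fun (Theta : set (TT Theta)) (fun th => p th i j).
  by move=> Xi Xj; apply/mon_TT; exact: mp.
have mlaw t j : X j -> measurable_fun (Theta : set (TT Theta))
    (fun th => mc_law X (p th) (delta i0) t j).
  elim: t j => [|t IH] j Xj; first exact: measurable_cst.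
  rewrite /mc_law /= /mc_step.
  apply: measurableT_comp => //.
  apply: esum_measurable => // i Xi.
  apply/measurable_EFinP; apply: measurable_funM; [exact: IH | exact: mpT].
have mpi j : X j -> measurable_fun (Theta : set (TT Theta)) (fun th => piv th j).
  move=> Xj; apply/measurable_EFinP.
  have h1 t : measurable_fun (Theta : set (TT Theta))
      (fun th => (mc_law X (p th) (delta i0) t j)%:E).
    by apply/measurable_EFinP; exact: mlaw.
  have h2 th : Theta th -> (fun t => (mc_law X (p th) (delta i0) t j)%:E) @ \oo
      --> (piv th j)%:E.
    move=> Tth; apply: cvg_EFin; first by apply: nearW.
    exact: (ergodic_pt (sP th Tth) (eP th Tth) (iP th Tth) Xi0 Xj).
  exact: (emeasurable_fun_cvg _ _ h1 h2).
rewrite /Fhat.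
apply: measurableT_comp => //.
apply: esum_measurable.
  by apply: (sub_countable (subset_card_le _) cX) => i [].
move=> i [Xi _].
apply: esum_measurable.
  by apply: (sub_countable (subset_card_le _) cX) => j [].
move=> j [Xj _].
apply/measurable_EFinP; apply: measurable_funM; [exact: mpi | exact: mpT].
Qed.
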